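(* Let $F:\mathbb{R}^d\to\mathbb{R}^d$ be $L$-Lipschitz and $\mu$-quasi strongly monotone with respect to $x^*$ where $F(x^* )=0$. Consider the deterministic past extragradient method: given $x_0$, $\hat x_{-1}=x_0$, and for $k\ge0$, $\hat x_k=x_k-\omega F(\hat x_{k-1})$, $x_{k+1}=x_k-\omega F(\hat x_k)$, with $0<\omega\le\frac1{4L}$. Then for all $k\ge0$, $$R_k^2\le\Big(1-\frac{\omega\mu}{2}\Big)^kR_0^2,\qquad R_k^2:=\|x_k-x^*\|^2+\|x_k-\hat x_{k-1}\|^2 .$$
   Context: $L$-Lipschitz: $\|F(x)-F(y)\|\le L\|x-y\|$. $\mu$-quasi strongly monotone ($\mu>0$): $\langle F(x),x-x^*\rangle\ge\mu\|x-x^*\|^2$ for all $x$. (This is the special case of stochastic past extragradient with exact operator evaluations, i.e. Expected Residual parameter $\delta=0$ and $\sigma_*^2=0$.) *)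

(* Defs.v *)
From mathcomp Require Import all_boot all_order all_algebra.
Set Implicit Arguments. Unset Strict Implicit. Unset Printing Implicit Defensive.
Import Order.TTheory GRing.Theory Num.Theory.
Local Open Scope ring_scope.

Definition dotv (R : rcfType) (d : nat) (u v : 'rV[R]_d) : R :=
  \sum_(i < d) u ord0 i * v ord0 i.

Definition normv (R : rcfType) (d : nat) (u : 'rV[R]_d) : R :=
  Num.sqrt (dotv u u).

Definition lipschitz (R : rcfType) (d : nat) (F : 'rV[R]_d -> 'rV[R]_d) (L : R) :=
  forall x y, normv (F x - F y) <= L * normv (x - y).

Definition quasi_strongly_monotone (R : rcfType) (d : nat)
  (F : 'rV[R]_d -> 'rV[R]_d) (mu : R) (xs : 'rV[R]_d) :=
  forall x, dotv (F x) (x - xs) >= mu * normv (x - xs) ^+ 2.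

(* Main.v *)
Require Import Defs.
From mathcomp Require Import all_boot all_order all_algebra.
From mathcomp Require Import ring lra.
Import Order.TTheory GRing.Theory Num.Theory.
Set Implicit Arguments. Unset Strict Implicit. Unset Printing Implicit Defensive.
Local Open Scope ring_scope.
Section V.
Variables (R : rcfType) (d : nat).
Implicit Types u v z : 'rV[R]_d.
Lemma dotvC u v : dotv u v = dotv v u.
Proof. by apply: eq_bigr => i _; rewrite mulrC. Qed.
Lemma dotvDl u v z : dotv (u + v) z = dotv u z + dotv v z.
Proof. by rewrite /dotv -big_split; apply: eq_bigr => i _; rewrite !mxE mulrDl. Qed.
Lemma dotvZl a u v : dotv (a *: u) v = a * dotv u v.
Proof. by rewrite /dotv mulr_sumr; apply: eq_bigr => i _; rewrite !mxE mulrA. Qed.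
Lemma dotvNl u v : dotv (- u) v = - dotv u v.
Proof. by rewrite -scaleN1r dotvZl mulN1r. Qed.
Lemma dotvDr u v z : dotv z (u + v) = dotv z u + dotv z v.
Proof. by rewrite dotvC dotvDl !(dotvC z). Qed.
Lemma dotvZr a u v : dotv v (a *: u) = a * dotv v u.
Proof. by rewrite dotvC dotvZl dotvC. Qed.
Lemma dotvNr u v : dotv v (- u) = - dotv v u.
Proof. by rewrite dotvC dotvNl dotvC. Qed.
Lemma dotv_ge0 u : 0 <= dotv u u.
Proof. by apply: sumr_ge0 => i _; rewrite -expr2 sqr_ge0. Qed.
Lemma normv2 u : normv u ^+ 2 = dotv u u.
Proof. by rewrite /normv sqr_sqrtr // dotv_ge0. Qed.
Lemma normv_ge0 u : 0 <= normv u.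
Proof. exact: sqrtr_ge0. Qed.
End V.
Lemma key (R: realFieldType) (U P B Hh G D M w L mu : R): 0<w -> 0<L -> 0<mu -> mu<=L -> w*L <= 1/4 ->
 mu*Hh <= M -> D <= L^+2*G -> G <= 2*P+2*w^+2*B -> U <= 2*Hh + 2*w^+2*B -> 0<=B -> 0<=P -> 0<=Hh -> 0<=G -> 0<=U ->
 U - 2*w*M + w^+2*D - w^+2*B + w^+2*D <= (1-w*mu/2)*(U+P).
Proof.
move=> w0 L0 m0 mL wL HM HD HG HU B0 P0 H0 G0 U0.
have wm : w*mu <= 1/4 by apply: le_trans wL; rewrite ler_pM2l.
have wm0 : 0 <= w*mu by rewrite mulr_ge0 // ltW.
have w2L : (w*L)^+2 <= 1/16.
  have wL0 : 0 <= w*L by rewrite mulr_ge0 // ltW.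
  rewrite expr2; nra.
have w20 : 0 <= w^+2 by rewrite sqr_ge0.
have h1 : w^+2*D <= (w*L)^+2 * G.
  rewrite exprMn -[in X in _ <= X]mulrA. by apply: ler_wpM2l.
have h2 : (w*L)^+2 * G <= 1/16 * (2*P+2*w^+2*B).
  apply: le_trans (ler_wpM2l (sqr_ge0 _) HG) _; apply: ler_wpM2r => //; lra.
have h3 : w*mu*Hh <= w*M by rewrite -[in X in X <= _]mulrA; apply: ler_wpM2l; [exact: ltW|].
have h4 : w*mu*U <= w*mu*(2*Hh + 2*w^+2*B) by apply: ler_wpM2l.
have h5 : w*mu*(w^+2*B) <= 1/4*(w^+2*B) by apply: ler_wpM2r => //; exact: mulr_ge0.
have h6 : w*mu*P <= 1/4*P by apply: ler_wpM2r.
have h7 : 0 <= w*mu*U by rewrite mulr_ge0.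
lra.
Qed.


Ltac dexp := rewrite ?(dotvDl, dotvDr, dotvNl, dotvNr, dotvZl, dotvZr).

Lemma step_alg (R : rcfType) (d : nat) (u p a b : 'rV[R]_d) (w L mu : R) :
  0<w -> 0<L -> 0<mu -> mu<=L -> w*L <= 1/4 ->
  mu * dotv (u - w*:b) (u - w*:b) <= dotv a (u - w*:b) ->
  dotv (a - b) (a - b) <= L^+2 * dotv (p - w*:b) (p - w*:b) ->
  dotv (u - w*:a) (u - w*:a) + dotv (w*:(b-a)) (w*:(b-a))
   <= (1 - w*mu/2) * (dotv u u + dotv p p).
Proof.
move=> w0 L0 m0 mL wL HM HD.
have HG : dotv (p - w*:b) (p - w*:b) <= 2 * dotv p p + 2 * w^+2 * dotv b b.
  have := dotv_ge0 (p + w*:b); dexp; rewrite ?(dotvC b p).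
  move=> h; rewrite -subr_ge0; apply: le_trans h _; rewrite le_eqVlt; apply/orP; left; apply/eqP; ring.
have HU : dotv u u <= 2 * dotv (u - w*:b) (u - w*:b) + 2 * w^+2 * dotv b b.
  have := dotv_ge0 (u - (2*w)*:b); dexp; rewrite ?(dotvC b u).
  move=> h; rewrite -subr_ge0; apply: le_trans h _; rewrite le_eqVlt; apply/orP; left; apply/eqP.
  dexp; rewrite ?(dotvC b u); ring.
have := key w0 L0 m0 mL wL HM HD HG HU (dotv_ge0 _) (dotv_ge0 _) (dotv_ge0 _) (dotv_ge0 _) (dotv_ge0 _).
move=> h; apply: le_trans h; rewrite le_eqVlt; apply/orP; left; apply/eqP.
dexp; rewrite ?(dotvC a u) ?(dotvC b u) ?(dotvC b a); ring.
Qed.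

Lemma mu_le_L (R : rcfType) (d : nat) (F : 'rV[R]_d -> 'rV[R]_d) (L mu : R) xs :
  0 < L -> lipschitz F L -> quasi_strongly_monotone F mu xs -> F xs = 0 -> (0 < d)%N ->
  mu <= L.
Proof.
move=> L0 HL HM Fxs d0.
set v : 'rV[R]_d := const_mx 1.
have V0 : 0 < dotv v v.
  rewrite /dotv (bigD1 (Ordinal d0)) //= !mxE mulr1.
  rewrite ltr_pwDl // sumr_ge0 // => i _; rewrite !mxE mulr1 //.
have e : xs + v - xs = v by rewrite addrC addKr.
have hm := HM (xs + v); rewrite e normv2 in hm.
have hl := HL (xs + v) xs; rewrite e Fxs subr0 in hl.
have hl2 : dotv (F (xs + v)) (F (xs + v)) <= L^+2 * dotv v v.
  have := ler_pM (normv_ge0 _) (normv_ge0 _) hl hl.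
  by rewrite -!expr2 exprMn !normv2.
have h0 := dotv_ge0 (F (xs + v) - L *: v).
move: h0; dexp; rewrite ?(dotvC v (F (xs + v))) => h0.
set A := dotv (F (xs + v)) (F (xs + v)) in hl2 h0.
set C := dotv (F (xs + v)) v in hm h0.
set V := dotv v v in V0 hm hl2 h0.
have h1 : 2 * L * (mu * V) <= 2 * L * (L * V) by nra.
have h2 : mu * V <= L * V by rewrite -(ler_pM2l (_ : 0 < 2 * L)) //; lra.
by rewrite -(ler_pM2r V0).
Qed.

Unset Implicit Arguments.
Theorem corollary4p2 (R : rcfType) (d : nat) (F : 'rV[R]_d -> 'rV[R]_d)
  (L mu w : R) (xs : 'rV[R]_d) (x xh : nat -> 'rV[R]_d) :
  0 < L -> lipschitz F L ->
  0 < mu -> quasi_strongly_monotone F mu xs -> F xs = 0 ->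
  0 < w -> w <= 1 / (4 * L) ->
  xh 0%N = x 0%N ->
  (forall k : nat, xh k.+1 = x k - w *: F (xh k)) ->
  (forall k : nat, x k.+1 = x k - w *: F (xh k.+1)) ->
  forall k : nat,
    normv (x k - xs) ^+ 2 + normv (x k - xh k) ^+ 2
    <= (1 - w * mu / 2) ^+ k * (normv (x 0%N - xs) ^+ 2 + normv (x 0%N - xh 0%N) ^+ 2).
Proof.
move=> L0 HL m0 HM Fxs w0 wL4 h0 Hh Hx.
case: (posnP d) => [d0|dpos].
  move=> k; have z : forall v : 'rV[R]_d, normv v = 0.
    by move=> v; rewrite /normv /dotv; move: v; rewrite d0 => v; rewrite big_ord0 sqrtr0.
  by rewrite !z expr0n /= !addr0 mulr0.
have mL := mu_le_L L0 HL HM Fxs dpos.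
have wL : w * L <= 1/4.
  by move: wL4; rewrite ler_pdivlMr ?mulr_gt0 // mulrA => h; rewrite ler_pdivlMr //; lra.
have c0 : 0 <= 1 - w * mu / 2.
  have : w * mu <= 1/4 by apply: le_trans wL; rewrite ler_pM2l.
  lra.
elim=> [|k IH]; first by rewrite expr0 mul1r.
have H := ler_wpM2l c0 IH; rewrite [in X in _ <= X]mulrA -exprS in H; apply: le_trans H.
set u := x k - xs; set p := x k - xh k; set a := F (xh k.+1); set b := F (xh k).
have e1 : x k.+1 - xs = u - w *: a by apply/rowP => i; rewrite Hx -/a !mxE; ring.
have e2 : xh k.+1 - xs = u - w *: b by apply/rowP => i; rewrite Hh -/b !mxE; ring.
have e3 : xh k.+1 - xh k = p - w *: b by apply/rowP => i; rewrite Hh -/b !mxE; ring.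
have e4 : x k.+1 - xh k.+1 = w *: (b - a) by apply/rowP => i; rewrite Hx -/a Hh -/b !mxE; ring.
rewrite e1 e4 !normv2.
apply: (step_alg (L:=L)) => //.
  by have := HM (xh k.+1); rewrite e2 normv2 -/a.
have hl := HL (xh k.+1) (xh k); rewrite e3 in hl.
have := ler_pM (normv_ge0 _) (normv_ge0 _) hl hl.
by rewrite -!expr2 exprMn !normv2.
Qed.
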